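(* Let $A\in\mathbb R^{n\times n}$ be tridiagonal, $n\ge 2$, and let $Q\in\mathbb R^{2n\times 2n}$ be the orthogonal matrix produced by Algorithm 1 (described in the context) applied to $A$. Then for every $1\le k<n$, the matrices $Q(1{:}k,\,k{+}1{:}n)$ and $Q(n{+}1{:}n{+}k,\,k{+}1{:}n)$ have rank at most $2$.
   Context: A Givens rotation on rows $p\ne q$ is an orthogonal matrix $G\in\mathbb R^{2n\times 2n}$ equal to the identity except in the entries $(p,p),(p,q),(q,p),(q,q)$, which form a $2\times2$ rotation $\begin{bmatrix}c&s\\-s&c\end{bmatrix}$, $c^2+s^2=1$. ''Rotate rows $p,q$ to annihilate $R(q,j)$'' means: choose such a $G$ for which $(G^{T}R)(q,j)=0$ and then update $R\leftarrow G^{T}R$, $Q\leftarrow QG$. Algorithm 1: Initialize $Q=I_{2n}$ and $R=\begin{bmatrix}A\\ I_n\end{bmatrix}\in\mathbb R^{2n\times n}$. First rotate rows $1,n+1$ to annihilate $R(n+1,1)$; then rotate rows $1,2$ to annihilate $R(2,1)$. Then for $i=2,\dots,n$: (a) rotate rows $n+1,n+i$ to annihilate $R(n+i,i)$; (b) rotate rows $i,n+1$ to annihilate $R(n+1,i)$; (c) if $i<n$, rotate rows $i,i+1$ to annihilate $R(i+1,i)$. On output $QR=\begin{bmatrix}A\\ I\end{bmatrix}$ with $R$ upper triangular. Notation $Q(a{:}b,c{:}d)$ denotes the submatrix with rows $a,\dots,b$ and columns $c,\dots,d$. *)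

(* Defs.v *)
From HB Require Import structures.
From mathcomp Require Import all_boot all_order all_algebra.
Set Implicit Arguments. Unset Strict Implicit. Unset Printing Implicit Defensive.
Import Order.TTheory GRing.Theory Num.Theory.
Local Open Scope ring_scope.

(* All indices below are 0-based natural numbers (paper's index t is t-1 here). *)

(* Entry of a matrix at natural-number indices (0 when out of range). *)
Definition mxn (R : nmodType) (a b : nat) (M : 'M[R]_(a, b)) (i j : nat) : R :=
  match @insub nat (fun x => x < a)%N 'I_a i, @insub nat (fun x => x < b)%N 'I_b j with
  | Some i', Some j' => M i' j'
  | _, _ => 0
  end.

Definition givens (R : ringType) (m p q : nat) (c s : R) : 'M[R]_m :=
  \matrix_(i < m, j < m)
    if (i == p :> nat) && (j == p :> nat) then c
    else if (i == p :> nat) && (j == q :> nat) then s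
    else if (i == q :> nat) && (j == p :> nat) then - s
    else if (i == q :> nat) && (j == q :> nat) then c
    else ((i == j)%:R : R).

Definition givens_step (R : ringType) (m n : nat) (p q j : nat)
    (st st' : 'M[R]_m * 'M[R]_(m, n)) : Prop :=
  exists c s : R,
    [/\ c ^+ 2 + s ^+ 2 = 1,
        mxn ((givens m p q c s)^T *m st.2) q j = 0,
        st'.2 = (givens m p q c s)^T *m st.2 &
        st'.1 = st.1 *m givens m p q c s].

(* The schedule of rotations (p, q, j) of Algorithm 1, 0-based:
   (0,n,0), (0,1,0), then for i' = 1..n-1 (paper's i = i'+1):
   (n, n+i', i'), (i', n, i'), and (i', i'+1, i') if i' < n-1. *)
Definition alg1_schedule (n : nat) : seq (nat * nat * nat) :=
  [:: (0, n, 0); (0, 1, 0)]%N ++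
  flatten [seq [:: (n, n + i, i); (i, n, i)]%N ++
               (if (i < n.-1)%N then [:: (i, i.+1, i)] else [::])
          | i <- iota 1 n.-1].

Fixpoint alg1_run (R : ringType) (m n : nat) (sch : seq (nat * nat * nat))
    (st st' : 'M[R]_m * 'M[R]_(m, n)) : Prop :=
  match sch with
  | [::] => st' = st
  | (p, q, j) :: sch' =>
      exists st1, givens_step p q j st st1 /\ alg1_run sch' st1 st'
  end.

Definition tridiagonal (R : nmodType) (n : nat) (A : 'M[R]_n) : Prop :=
  forall i j : 'I_n, (i.+1 < j)%N || (j.+1 < i)%N -> A i j = 0.

(* Main.v *)
Require Import Defs.
From HB Require Import structures.
From mathcomp Require Import all_boot all_order all_algebra.
From mathcomp Require Import zify.
Import GRing.Theory Num.Theory.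
Set Implicit Arguments. Unset Strict Implicit.
Local Open Scope ring_scope.

Section Aux.
Variable F : fieldType.

Definition suppd m (S : pred nat) (M : 'M[F]_m) :=
  forall i j : 'I_m, ~~ (S i && S j) -> M i j = (i == j)%:R.

Lemma suppd1 m S : suppd S (1%:M : 'M[F]_m).
Proof. by move=> i j _; rewrite mxE. Qed.

Lemma suppdM m S (A B : 'M[F]_m) : suppd S A -> suppd S B -> suppd S (A *m B).
Proof.
move=> hA hB i j hij; rewrite mxE.
case Si: (S i).
  have Sj: S j = false by move: hij; rewrite Si /=; case: (S j).
  transitivity ((A *m 1%:M) i j); last by rewrite mulmx1 hA // Sj andbF.
  by rewrite mxE; apply: eq_bigr => l _; rewrite hB ?Sj ?andbF // mxE.
transitivity ((1%:M *m B) i j); last by rewrite mul1mx hB ?Si.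
by rewrite mxE; apply: eq_bigr => l _; rewrite hA ?Si // mxE.
Qed.

Lemma suppd_givens m (S : pred nat) p q c s :
  S p -> S q -> suppd S (givens m p q c s).
Proof.
move=> Sp Sq i j hij; rewrite mxE.
case/nandP: hij => H.
  have ip : (i == p :> nat) = false by apply/eqP => e; move: H; rewrite e Sp.
  have iq : (i == q :> nat) = false by apply/eqP => e; move: H; rewrite e Sq.
  by rewrite ip iq.
have jp : (j == p :> nat) = false by apply/eqP => e; move: H; rewrite e Sp.
have jq : (j == q :> nat) = false by apply/eqP => e; move: H; rewrite e Sq.
by rewrite jp jq !andbF.
Qed.

Lemma run_cat m n (s1 s2 : seq (nat * nat * nat)) (st st' : 'M[F]_m * 'M[F]_(m, n)) :
  alg1_run (s1 ++ s2) st st' -> exists st1, alg1_run s1 st st1 /\ alg1_run s2 st1 st'.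
Proof.
elim: s1 st => [|[[p q] j] s1 IH] st /=; first by move=> h; exists st.
move=> [st1 [h1 h2]]; have [st2 [h3 h4]] := IH _ h2.
by exists st2; split => //; exists st1.
Qed.

Lemma run_supp m n (S : pred nat) (sch : seq (nat * nat * nat)) (st st' : 'M[F]_m * 'M[F]_(m, n)) :
  alg1_run sch st st' -> all (fun x => S x.1.1 && S x.1.2) sch ->
  exists M, suppd S M /\ st'.1 = st.1 *m M.
Proof.
elim: sch st => [|[[p q] j] s IH] st /=.
  by move=> ->; exists 1%:M; split; [apply: suppd1|rewrite mulmx1].
move=> [st1 [[c [s' [_ _ _ e1]]] h2]] /andP[/andP[Sp Sq] ha].
have [M [hM e]] := IH _ h2 ha.
exists (givens m p q c s' *m M); split; first by apply: suppdM => //; apply: suppd_givens.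
by rewrite e e1 mulmxA.
Qed.

Lemma prod2 m (S1 T : pred nat) (P M : 'M[F]_m) (a b i c : 'I_m) :
  suppd S1 P -> suppd T M -> a != b -> T c ->
  (forall l : 'I_m, T l -> S1 l -> (l == a) || (l == b)) ->
  (forall l : 'I_m, T l -> ~~ S1 l -> l != i) ->
  (P *m M) i c = P i a * M a c + P i b * M b c.
Proof.
move=> hP hM ab Tc h1 h2; rewrite mxE (bigD1 a) //= (bigD1 b) 1?eq_sym //=.
rewrite big1 ?addr0 // => l /andP[la lb].
case Tl: (T l).
  case S1l: (S1 l).
    by move: (h1 l Tl S1l); rewrite (negbTE la) (negbTE lb).
  rewrite hP ?S1l ?andbF //.
  by have := h2 l Tl (negbT S1l); rewrite eq_sym => /negbTE ->; rewrite mul0r.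
rewrite (hM l c) ?Tl //.
have -> : (l == c) = false by apply/eqP => e; move: Tl; rewrite e Tc.
by rewrite mulr0.
Qed.

End Aux.

Lemma mxn_ord (R : nmodType) a b (M : 'M[R]_(a, b)) i j (hi : (i < a)%N) (hj : (j < b)%N) :
  mxn M i j = M (Ordinal hi) (Ordinal hj).
Proof.
rewrite /mxn; case: insubP => [i' _ ei|]; last by rewrite hi.
case: insubP => [j' _ ej|]; last by rewrite hj.
by congr (M _ _); apply: val_inj.
Qed.

Lemma all_flatten_map (T U : Type) (a : pred U) (f : T -> seq U) s :
  all a (flatten (map f s)) = all (fun i => all a (f i)) s.
Proof. by elim: s => //= x s IH; rewrite all_cat IH. Qed.

Theorem theorem4p1 (R : rcfType) (n : nat) (A : 'M[R]_n)
    (Q : 'M[R]_(n + n)) (Rfin : 'M[R]_(n + n, n)) :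
  (2 <= n)%N ->
  tridiagonal A ->
  alg1_run (alg1_schedule n) (1%:M, col_mx A 1%:M) (Q, Rfin) ->
  forall k : nat, (1 <= k < n)%N ->
    (\rank (\matrix_(i < k, j < n - k) mxn Q i (k + j)) <= 2)%N /\
    (\rank (\matrix_(i < k, j < n - k) mxn Q (n + i) (k + j)) <= 2)%N.
Proof.
move=> n2 _ hrun k /andP[k1 kn].
pose f := fun i : nat => [:: (n, n + i, i); (i, n, i)]%N ++
               (if (i < n.-1)%N then [:: (i, i.+1, i)] else [::]).
have esch : alg1_schedule n =
  ([:: (0, n, 0); (0, 1, 0)]%N ++ flatten [seq f i | i <- iota 1 k.-1]) ++
  flatten [seq f i | i <- iota k (n - k)].
  have eiota : iota 1 n.-1 = iota 1 k.-1 ++ iota k (n - k).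
    have -> : n.-1 = (k.-1 + (n - k))%N by lia.
    by rewrite iotaD; congr (_ ++ iota _ _); lia.
  by rewrite /alg1_schedule eiota map_cat flatten_cat catA.
rewrite esch in hrun.
have [st1 [r1 r2]] := run_cat hrun.
pose S1 := fun x : nat => (x <= k)%N || ((n <= x) && (x < n + k))%N.
pose T := fun x : nat => ((k <= x) && (x <= n))%N || (n + k <= x)%N.
case: (run_supp (S:=S1) r1) => [|P [hP eP]].
  rewrite all_cat all_flatten_map /= /S1.
  apply/andP; split; first by apply/andP; split; lia.
  apply/allP => i; rewrite mem_iota => hi; rewrite /f; case: ifP => _ /=; lia.
case: (run_supp (S:=T) r2) => [|M [hM eM]].
  rewrite all_flatten_map /= /T.
  apply/allP => i; rewrite mem_iota => hi; rewrite /f; case: ifP => _ /=; lia.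
have eQ : Q = P *m M by rewrite /= in eM; rewrite eM eP mul1mx.
have kN : (k < n + n)%N by lia.
have nN : (n < n + n)%N by lia.
pose a : 'I_(n + n) := Ordinal kN.
pose b : 'I_(n + n) := Ordinal nN.
have hcj : forall j : 'I_(n - k), (k + j < n + n)%N by move=> j; have := ltn_ord j; lia.
pose cj := fun j : 'I_(n - k) => Ordinal (hcj j).
have gen : forall ri : 'I_k -> 'I_(n + n),
    (forall (i : 'I_k) (l : 'I_(n + n)), T l -> ~~ S1 l -> l != ri i) ->
    forall Mx : 'M[R]_(k, n - k), (forall i j, Mx i j = (P *m M) (ri i) (cj j)) ->
    (\rank Mx <= 2)%N.
  move=> ri hri Mx hMx.
  have -> : Mx = (\matrix_(i < k, t < 2) (if t == 0 :> nat then P (ri i) a else P (ri i) b))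
     *m (\matrix_(t < 2, j < n - k) (if t == 0 :> nat then M a (cj j) else M b (cj j))).
    apply/matrixP => i j; rewrite hMx (@prod2 _ _ S1 T P M a b (ri i) (cj j) hP hM).
    - by rewrite !mxE big_ord_recr big_ord1 /= !mxE.
    - by rewrite -val_eqE /=; lia.
    - by rewrite /T /=; have := ltn_ord j; lia.
    - by move=> l; rewrite /T /S1 -!val_eqE /= => *; lia.
    - exact: hri.
  exact: leq_trans (mxrankM_maxl _ _) (rank_leq_col _).
have hr1 : forall i : 'I_k, (i < n + n)%N by move=> i; have := ltn_ord i; lia.
have hr2 : forall i : 'I_k, (n + i < n + n)%N by move=> i; have := ltn_ord i; lia.
split.
  apply: (gen (fun i => Ordinal (hr1 i))).
    by move=> i l; rewrite /T /S1 -val_eqE /= => *; have := ltn_ord i; lia.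
  by move=> i j; rewrite mxE (mxn_ord _ (hr1 i) (hcj j)) eQ.
apply: (gen (fun i => Ordinal (hr2 i))).
  by move=> i l; rewrite /T /S1 -val_eqE /= => *; have := ltn_ord i; lia.
by move=> i j; rewrite mxE (mxn_ord _ (hr2 i) (hcj j)) eQ.
Qed.
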